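(* Let $d\ge 1$ and $a=(a_1,\dots,a_d)\in\mathbb{R}^d$. Then $a$ is a Nuij sequence if and only if the polynomial $$q_a(z):=z^d+\sum_{k=1}^d a_k (z^d)^{(k)} = z^d+\sum_{k=1}^d a_k\frac{d!}{(d-k)!}z^{d-k}$$ is hyperbolic.
   Context: A polynomial $p\in\mathbb{R}[z]$ is called hyperbolic if all its roots are real. A sequence $a=(a_1,\dots,a_d)\in\mathbb{R}^d$ is called a Nuij sequence if for every hyperbolic polynomial $p\in\mathbb{R}[z]$ of degree $d$, the polynomial $p_a(z,s):=p(z)+\sum_{k=1}^d a_k s^k p^{(k)}(z)\in\mathbb{R}[z]$ is hyperbolic for every $s\in\mathbb{R}$. Here $p^{(k)}$ denotes the $k$-th derivative with respect to $z$. *)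

(* Defs.v *)
From mathcomp Require Import all_boot all_order all_algebra.
From mathcomp Require Import reals.
Set Implicit Arguments. Unset Strict Implicit. Unset Printing Implicit Defensive.
Import Order.TTheory GRing.Theory Num.Theory.
Local Open Scope ring_scope.

Definition hyperbolic (R : realType) (p : {poly R}) : Prop :=
  p != 0 /\ exists s : seq R, p = lead_coef p *: \prod_(x <- s) ('X - x%:P).

(* p_a(z,s) = p(z) + sum_{k=1}^d a_k s^k p^(k)(z), with a : 'I_d -> R,
   a (k-1) = a_k. *)
Definition nuij_poly (R : realType) (d : nat) (a : 'I_d -> R)
  (p : {poly R}) (s : R) : {poly R} :=
  p + \sum_(k < d) (a k * s ^+ k.+1) *: p^`(k.+1).

Definition is_Nuij (R : realType) (d : nat) (a : 'I_d -> R) : Prop :=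
  forall p : {poly R}, (size p).-1 = d -> hyperbolic p ->
    forall s : R, hyperbolic (nuij_poly a p s).

Definition q_poly (R : realType) (d : nat) (a : 'I_d -> R) : {poly R} :=
  'X^d + \sum_(k < d) a k *: ('X^d)^`(k.+1).

(* Main.v *)
Require Import Defs.
From mathcomp Require Import all_boot all_order all_algebra.
From mathcomp Require Import reals.
From mathcomp Require Import complex.
From mathcomp Require Import ring lra.
Set Implicit Arguments. Unset Strict Implicit. Unset Printing Implicit Defensive.
Import Order.TTheory GRing.Theory Num.Theory.
Local Open Scope ring_scope.

Section ApplyD.
Variable K : fieldType.
Implicit Types (phi psi p q : {poly K}).

Definition applyD phi p := \sum_(i < size phi) phi`_i *: p^`(i).

Lemma applyD_widen phi p n : (size phi <= n)%N ->
  applyD phi p = \sum_(i < n) phi`_i *: p^`(i).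
Proof.
move=> hn; rewrite /applyD (big_ord_widen n (fun i => phi`_i *: p^`(i)) hn).
rewrite big_mkcond /=; apply: eq_bigr => i _.
by case: ifP => // /negbT; rewrite -leqNgt => h; rewrite nth_default // scale0r.
Qed.

Lemma applyDD phi psi p : applyD (phi + psi) p = applyD phi p + applyD psi p.
Proof.
set n := maxn (size phi) (size psi).
rewrite (@applyD_widen (phi + psi) _ n) ?(leq_trans (size_polyD _ _)) //.
rewrite (@applyD_widen phi _ n) ?leq_maxl // (@applyD_widen psi _ n) ?leq_maxr //.
by rewrite -big_split /=; apply: eq_bigr => i _; rewrite coefD scalerDl.
Qed.

Lemma applyDZ c phi p : applyD (c *: phi) p = c *: applyD phi p.
Proof.
rewrite (@applyD_widen (c *: phi) _ (size phi)) ?size_scale_leq //.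
by rewrite /applyD scaler_sumr; apply: eq_bigr => i _; rewrite coefZ scalerA.
Qed.

Lemma applyD_sum (I : Type) (r : seq I) (F : I -> {poly K}) p :
  applyD (\sum_(i <- r) F i) p = \sum_(i <- r) applyD (F i) p.
Proof.
elim: r => [|x r IH]; last by rewrite !big_cons applyDD IH.
by rewrite !big_nil /applyD size_poly0 big_ord0.
Qed.

Lemma applyDpD phi p q : applyD phi (p + q) = applyD phi p + applyD phi q.
Proof.
by rewrite /applyD -big_split /=; apply: eq_bigr => i _; rewrite derivnD scalerDr.
Qed.

Lemma applyDpZ c phi p : applyD phi (c *: p) = c *: applyD phi p.
Proof.
rewrite /applyD scaler_sumr; apply: eq_bigr => i _.
by rewrite derivnZ !scalerA mulrC.
Qed.

Lemma applyD_deriv phi p : applyD phi p^`() = (applyD phi p)^`().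
Proof.
rewrite /applyD raddf_sum /=; apply: eq_bigr => i _.
by rewrite derivZ -derivSn derivnS.
Qed.

Lemma derivn_mulX p i : ('X * p)^`(i) = 'X * p^`(i) + i%:R *: p^`(i.-1).
Proof.
elim: i => [|i IH]; first by rewrite scale0r addr0.
rewrite derivnS IH derivD derivM derivX mul1r derivZ.
case: i IH => [|i] IH /=; first by rewrite scale0r addr0 scale1r addrC.
by rewrite -(nat1r i.+1) scalerDl scale1r addrCA addrA.

Qed.

Lemma applyD_mulX phi p :
  applyD phi ('X * p) = 'X * applyD phi p + applyD phi^`() p.
Proof.
rewrite (@applyD_widen phi _ (size phi).+1) // (@applyD_widen phi p (size phi).+1) //.
rewrite (@applyD_widen phi^`() p (size phi)); last first.
  have [->|nz] := eqVneq phi 0; first by rewrite deriv0 size_poly0.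
  exact: ltnW (lt_size_deriv nz).
rewrite mulr_sumr (eq_bigr (fun i : 'I_(size phi).+1 =>
   'X * (phi`_i *: p^`(i)) + phi`_i *: (i%:R *: p^`(i.-1)))); last first.
  by move=> i _; rewrite derivn_mulX scalerDr scalerAr.
rewrite big_split /=; congr (_ + _).
rewrite big_ord_recl /= scale0r scaler0 add0r; apply: eq_bigr => i _.
by rewrite coef_deriv scalerA /bump /= mulr_natr.
Qed.

Lemma applyD1 phi : applyD phi 1 = (phi`_0)%:P.
Proof.
rewrite (@applyD_widen phi _ (size phi).+1) // big_ord_recl big1 ?addr0.
  by rewrite derivn0 -mul_polyC mulr1.
by move=> i _; rewrite -[1]/(1%:P) derivnC /= scaler0.
Qed.

Lemma applyD_Xn m p : applyD ('X^m) p = p^`(m).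
Proof.
rewrite /applyD size_polyXn (bigD1 (Ordinal (ltnSn m))) //= coefXn eqxx scale1r.
rewrite big1 ?addr0 // => i /eqP ne; rewrite coefXn.
case: eqP => [e|]; last by rewrite scale0r.
by case: ne; apply: val_inj.
Qed.

Lemma applyD_const c p : applyD c%:P p = c *: p.
Proof. by rewrite -alg_polyC -(expr0 ('X : {poly K})) applyDZ applyD_Xn derivn0. Qed.

Fixpoint EE (phi : {poly K}) (ys : seq K) : K :=
  match ys with [::] => phi`_0 | y :: ys' => EE (phi^`() + y *: phi) ys' end.

Lemma identA (lams : seq K) phi x0 :
  (applyD phi (\prod_(l <- lams) ('X - l%:P))).[x0] =
  EE phi [seq x0 - l | l <- lams].
Proof.
elim: lams phi => [|l lams IH] phi /=.
  by rewrite big_nil applyD1 hornerC.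
rewrite big_cons -IH mulrBl mul_polyC -scaleNr applyDpD applyDpZ applyD_mulX.
rewrite applyDD applyDZ !hornerE /=.
ring.
Qed.

End ApplyD.

Lemma applyD_map (K L : fieldType) (f : {rmorphism K -> L}) phi p :
  applyD (map_poly f phi) (map_poly f p) = map_poly f (applyD phi p).
Proof.
rewrite /applyD size_map_poly rmorph_sum /=; apply: eq_bigr => i _.
by rewrite coef_map derivn_map linearZ.
Qed.
Section Cx.
Variable R : realType.
Local Notation C := R[i].
Local Notation cRe := (@complex.Re R).
Local Notation cIm := (@complex.Im R).

Lemma ReM (x y : C) : cRe (x * y) = cRe x * cRe y - cIm x * cIm y.
Proof. by case: x => a b; case: y => c d. Qed.
Lemma ImM (x y : C) : cIm (x * y) = cRe x * cIm y + cIm x * cRe y.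
Proof. by case: x => a b; case: y => c d. Qed.
Lemma ReD (x y : C) : cRe (x + y) = cRe x + cRe y.
Proof. by case: x => a b; case: y => c d. Qed.
Lemma ImD (x y : C) : cIm (x + y) = cIm x + cIm y.
Proof. by case: x => a b; case: y => c d. Qed.
Lemma ReB (x y : C) : cRe (x - y) = cRe x - cRe y.
Proof. by case: x => a b; case: y => c d. Qed.
Lemma ImB (x y : C) : cIm (x - y) = cIm x - cIm y.
Proof. by case: x => a b; case: y => c d. Qed.
Lemma Re0 : cRe 0 = 0. Proof. by []. Qed.
Lemma Im0 : cIm 0 = 0. Proof. by []. Qed.
Lemma Re_nat n : cRe n%:R = n%:R.
Proof. by rewrite -(rmorph_nat (real_complex R)). Qed.
Lemma Im_nat n : cIm n%:R = 0.
Proof. by rewrite -(rmorph_nat (real_complex R)). Qed.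
Lemma Re_real (x : R) : cRe x%:C%C = x. Proof. by []. Qed.
Lemma Im_real (x : R) : cIm x%:C%C = 0. Proof. by []. Qed.

Lemma inv_ineq (z r : C) : 0 < cIm z -> cIm r <= 0 ->
  cIm z * (cRe (z - r)^-1 ^+ 2 + cIm (z - r)^-1 ^+ 2) + cIm (z - r)^-1 <= 0.
Proof.
move=> hz hr; set m := (z - r)^-1.
have nz : z - r != 0.
  by apply/eqP => e; move: (congr1 cIm e); rewrite ImB Im0 => e'; lra.
have e : m * (z - r) = 1 by rewrite mulVf.
have eR := congr1 cRe e; have eI := congr1 cIm e.
rewrite ReM ReB ImB in eR; rewrite ImM ImB ReB in eI.
rewrite [cRe 1](Re_nat 1) in eR; rewrite [cIm 1](Im_nat 1) in eI.
set a := cRe m in eR eI *; set b := cIm m in eR eI *.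
set u := cRe z - cRe r in eR eI; set v := cIm z - cIm r in eR eI.
have key : b + v * (a ^+ 2 + b ^+ 2) = 0.
  have -> : b + v * (a ^+ 2 + b ^+ 2) = b * (1 - (a * u - b * v)) + a * (a * v + b * u) by ring.
  by rewrite eR eI; ring.
have hv : cIm z <= v by rewrite /v; lra.
nra.
Qed.

Lemma sum_ineq (z : C) (rs : seq C) : 0 < cIm z -> all (fun r => cIm r <= 0) rs ->
  exists T : R, [/\ 0 <= T, cRe (\sum_(r <- rs) (z - r)^-1) ^+ 2 + cIm (\sum_(r <- rs) (z - r)^-1) ^+ 2 <= (size rs)%:R * T
                  & cIm z * T + cIm (\sum_(r <- rs) (z - r)^-1) <= 0].
Proof.
move=> hz; elim: rs => [|r rs IH] /=.
  by move=> _; exists 0; rewrite big_nil Re0 Im0; split => //; lra.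
case/andP=> hr /IH [T [T0 hA hB]].
have hm := inv_ineq hz hr.
set m := (z - r)^-1 in hm *.
exists (T + (cRe m ^+ 2 + cIm m ^+ 2)); rewrite big_cons ReD ImD.
set A := cRe (\sum_(j <- rs) (z - j)^-1) in hA hB *.
set B := cIm (\sum_(j <- rs) (z - j)^-1) in hA hB *.
set a := cRe m in hm *; set b := cIm m in hm *.
set k : R := (size rs)%:R in hA *.
have k0 : 0 <= k by rewrite /k ler0n.
rewrite -natr1 -/k; split.
- nra.
- have h1 : 0 <= (A - k * a) ^+ 2 + (B - k * b) ^+ 2 by rewrite addr_ge0 ?sqr_ge0.
  have [kz|kp] := eqVneq k 0.
    rewrite kz in hA *; have : A ^+ 2 + B ^+ 2 <= 0 by lra.
    move=> h; have hA0 : A = 0 by nra.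
    have hB0 : B = 0 by nra.
    rewrite hA0 hB0; nra.
  have kp' : 0 < k by rewrite lt_neqAle eq_sym kp k0.
  nra.
- nra.
Qed.
End Cx.

Section Cx2.
Variable R : realType.
Local Notation C := R[i].
Local Notation cRe := (@complex.Re R).
Local Notation cIm := (@complex.Im R).

Lemma prod_deriv_eval (rs : seq C) z : all (fun r => z != r) rs ->
  (\prod_(r <- rs) ('X - r%:P))^`().[z] =
  (\prod_(r <- rs) ('X - r%:P)).[z] * \sum_(r <- rs) (z - r)^-1.
Proof.
elim: rs => [|r rs IH] /=; first by rewrite !big_nil mulr0 -[1 in LHS]/((1 : C)%:P) derivC horner0.
case/andP => hr /IH {}IH.
rewrite !big_cons derivM derivXsubC mul1r hornerD !hornerM IH hornerXsubC.
have nz : z - r != 0 by rewrite subr_eq0.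
set Q := (\prod_(j <- rs) ('X - j%:P)).[z]; set S := \sum_(j <- rs) (z - j)^-1.
have h : (z - r) * (z - r)^-1 = 1 by rewrite mulfV.
have -> : (z - r) * Q * ((z - r)^-1 + S) = Q * ((z - r) * (z - r)^-1) + (z - r) * (Q * S) by ring.
by rewrite h mulr1.
Qed.

Lemma laguerre (f : {poly C}) (N : nat) (y z : C) : (0 < N)%N ->
  (size f <= N.+1)%N -> (forall w, 0 < cIm w -> f.[w] != 0) ->
  0 < cIm y -> 0 < cIm z -> N%:R * f.[z] + (y - z) * f^`().[z] != 0.
Proof.
move=> N0 hsz hf hy hz.
have f0 : f != 0 by apply/eqP => e; move: (hf z hz); rewrite e horner0 eqxx.
have [rs Df] := closed_field_poly_normal f.
set c := lead_coef f in Df; set P := \prod_(r <- rs) ('X - r%:P) in Df.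
have c0 : c != 0 by rewrite lead_coef_eq0.
have hrs : (size rs <= N)%N.
  by move: hsz; rewrite Df size_scale // size_prod_XsubC.
have hroots : all (fun r => cIm r <= 0) rs.
  apply/allP => r rin; rewrite leNgt; apply/negP => hr.
  move: (hf r hr); rewrite Df hornerZ.
  have : root P r by rewrite root_prod_XsubC.
  by move/eqP => ->; rewrite mulr0 eqxx.
have hzn : all (fun r => z != r) rs.
  apply/allP => r rin; apply/eqP => e; move/allP: hroots => /(_ r rin).
  by rewrite -e; lra.
have Pz : P.[z] != 0.
  by apply/eqP => e; move: (hf z hz); rewrite Df hornerZ e mulr0 eqxx.
rewrite Df derivZ !hornerZ prod_deriv_eval //.
have -> : N%:R * (c * P.[z]) + (y - z) * (c * (P.[z] * \sum_(r <- rs) (z - r)^-1))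
  = (c * P.[z]) * (N%:R + (y - z) * \sum_(r <- rs) (z - r)^-1) by ring.
rewrite mulf_neq0 ?mulf_neq0 //.
have [T [T0 hA hB]] := sum_ineq hz hroots.
set S := \sum_(r <- rs) (z - r)^-1 in hA hB *.
apply/eqP => e.
have eR := congr1 cRe e; have eI := congr1 cIm e.
rewrite ReD ReM Re_nat ReB ImB Re0 in eR.
rewrite ImD ImM Im_nat ReB ImB Im0 in eI.
set A := cRe S in hA hB eR eI; set B := cIm S in hA hB eR eI.
set k : R := (size rs)%:R in hA.
have kN : k <= N%:R by rewrite /k ler_nat.
have k0 : 0 <= k by rewrite /k ler0n.
have N0' : 0 < (N%:R : R) by rewrite ltr0n.
set n : R := N%:R in kN N0' eR.
set u := cRe y - cRe z in eR eI; set v := cIm y - cIm z in eR eI.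
have key : n * B - v * (A ^+ 2 + B ^+ 2) = 0.
  have -> : n * B - v * (A ^+ 2 + B ^+ 2) =
     B * (n + (u * A - v * B)) - A * (u * B + v * A) by ring.
  by rewrite add0r in eI; rewrite eR eI; ring.
have pos : 0 < A ^+ 2 + B ^+ 2.
  rewrite lt_neqAle addr_ge0 ?sqr_ge0 // andbT; apply/eqP => h.
  have hA0 : A = 0 by nra.
  have hB0 : B = 0 by nra.
  by move: eR; rewrite hA0 hB0 !mulr0 subr0 addr0 => h'; lra.
have s1 : cIm z * (A ^+ 2 + B ^+ 2) <= cIm z * (n * T).
  by apply: ler_wpM2l; [lra | nra].
have hv : cIm z + v = cIm y by rewrite /v; lra.
nra.
Qed.
End Cx2.

Lemma size_derivn_le (K : fieldType) (p : {poly K}) i : (size p^`(i) <= size p)%N.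
Proof.
elim: i => [|i IH]; first by rewrite derivn0.
rewrite derivnS; apply: leq_trans IH.
have [->|nz] := eqVneq p^`(i) 0; first by rewrite deriv0 size_poly0.
exact: ltnW (lt_size_deriv nz).
Qed.

Lemma size_applyD (K : fieldType) (phi p : {poly K}) : (size (applyD phi p) <= size p)%N.
Proof.
rewrite /applyD; apply: (big_ind (fun q : {poly K} => (size q <= size p)%N)).
- by rewrite size_poly0.
- by move=> a b ha hb; apply: leq_trans (size_polyD _ _) _; rewrite geq_max ha hb.
- by move=> i _; apply: leq_trans (size_scale_leq _ _) (size_derivn_le _ _).
Qed.

Section Cx3.
Variable R : realType.
Local Notation C := R[i].
Local Notation cRe := (@complex.Re R).
Local Notation cIm := (@complex.Im R).

Lemma gws (n : nat) : forall (phi : {poly C}),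
  (forall w, 0 < cIm w -> (applyD phi 'X^n).[w] != 0) ->
  forall ys, size ys = n -> all (fun y => 0 < cIm y) ys -> EE phi ys != 0.
Proof.
elim: n => [|n IH] phi hphi [|y ys] //= hsz hall.
  have := hphi 'i%C; rewrite expr0 applyD1 hornerC; apply => /=; lra.
case/andP: hall => hy hys; case: hsz => hsz.
apply: IH => // w hw.
set A := applyD phi 'X^n; set B := applyD phi^`() 'X^n.
set Q := applyD phi 'X^(n.+1).
have hQ : Q = 'X * A + B by rewrite /Q exprS applyD_mulX.
have hQ' : Q^`() = n.+1%:R *: A.
  by rewrite /Q -applyD_deriv derivXn -scaler_nat applyDpZ.
have sQ : (size Q <= n.+2)%N by apply: leq_trans (size_applyD _ _) _; rewrite size_polyXn.
have := laguerre (isT : (0 < n.+1)%N) sQ (hphi) hy hw.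
rewrite applyDD applyDZ hornerD hornerZ -/A -/B hQ' hQ hornerD hornerZ hornerM hornerX.
apply: contra => /eqP h; apply/eqP.
have -> : n.+1%:R * (w * A.[w] + B.[w]) + (y - w) * (n.+1%:R * A.[w]) =
   n.+1%:R * (B.[w] + y * A.[w]) by ring.
by rewrite h mulr0.
Qed.
End Cx3.

Section Real.
Variable R : realType.
Local Notation C := R[i].
Local Notation cRe := (@complex.Re R).
Local Notation cIm := (@complex.Im R).
Local Notation toC := (real_complex R).


Lemma Im_sub_real (z : C) (x : R) : cIm (z - toC x) = cIm z.
Proof. by rewrite ImB Im_real subr0. Qed.

Lemma hyp_noroots (q : {poly R}) : hyperbolic q ->
  forall z : C, cIm z != 0 -> (map_poly toC q).[z] != 0.
Proof.
case=> q0 [s Dq] z hz.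
rewrite Dq map_polyZ map_prod_XsubC hornerZ horner_prod mulf_neq0 //.
  by rewrite fmorph_eq0 lead_coef_eq0.
rewrite prodf_seq_neq0; apply/allP => x _ /=; rewrite hornerXsubC.
by apply/eqP => e; move: (congr1 cIm e); rewrite Im_sub_real Im0 => e'; rewrite e' eqxx in hz.
Qed.

Lemma noroots_hyp (f : {poly R}) :
  (forall z : C, cIm z != 0 -> (map_poly toC f).[z] != 0) -> hyperbolic f.
Proof.
move=> hf.
have f0 : f != 0.
  apply/eqP => e; have h := hf 'i%C (oner_neq0 R).
  by rewrite e rmorph0 horner0 eqxx in h.
split => //.
have [rs Dr] := closed_field_poly_normal (map_poly toC f).
have hreal : forall z, z \in rs -> z = toC (cRe z).
  move=> z zin; case: z zin => a b zin /=.
  have : root (map_poly toC f) (a +i* b)%C.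
    by rewrite Dr rootZ ?root_prod_XsubC // lead_coef_eq0 map_poly_eq0.
  case: (eqVneq b 0) => [->|bn] //.
  by move/eqP => e; move: (hf (a +i* b)%C bn); rewrite e eqxx.
exists (map cRe rs).
apply: (@map_inj_poly _ _ toC); first exact: complexI.
  by rewrite rmorph0.
rewrite map_polyZ map_prod_XsubC -lead_coef_map Dr lead_coefZ lead_coef_prod_XsubC mulr1.
rewrite big_map; congr (_ *: _); apply: eq_big_seq => z zin.
by congr ('X - _%:P); exact: hreal.
Qed.

Lemma conj_eval (P : {poly R}) (z : C) :
  (map_poly toC P).[(z^*)%C] = (((map_poly toC P).[z])^*)%C.
Proof.
rewrite -horner_map /= -map_poly_comp; congr (_.[_]).
by apply: eq_map_poly => x /=; rewrite oppr0.
Qed.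

Lemma main_noroots (phi p : {poly R}) (c : R) (lams : seq R) :
  c != 0 -> p = c *: \prod_(l <- lams) ('X - l%:P) ->
  (forall z : C, cIm z != 0 ->
     (map_poly toC (applyD phi 'X^(size lams))).[z] != 0) ->
  forall z : C, cIm z != 0 -> (map_poly toC (applyD phi p)).[z] != 0.
Proof.
move=> c0 Dp hq.
suff pos : forall z : C, 0 < cIm z -> (map_poly toC (applyD phi p)).[z] != 0.
  move=> z hz; case: (ltgtP (cIm z) 0) => [hneg|hpos|heq].
  - rewrite -(conjcK z) conj_eval conjc_eq0; apply: pos.
    by case: z hneg {hz} => a b /=; lra.
  - exact: pos.
  - by rewrite heq eqxx in hz.
move=> z hz.
rewrite -applyD_map Dp map_polyZ map_prod_XsubC applyDpZ hornerZ mulf_neq0 //.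
  by rewrite fmorph_eq0.
rewrite -(big_map toC predT (fun l => 'X - l%:P)) identA.
apply: (@gws R (size lams)).
- move=> w hw; rewrite -(map_polyXn toC) applyD_map; apply: hq.
  by rewrite gt_eqF.
- by rewrite !size_map.
- by apply/allP => y /mapP [x /mapP [r _ ->] ->]; rewrite ImB /= subr0.
Qed.

Lemma scale_eval (F : fieldType) d (c : 'I_d -> F) (s z : F) : s != 0 ->
  ('X^d + \sum_(k < d) (c k * s ^+ k.+1) *: ('X^d)^`(k.+1)).[z] =
  s ^+ d * ('X^d + \sum_(k < d) c k *: ('X^d)^`(k.+1)).[z / s].
Proof.
move=> s0.
rewrite !hornerD !horner_sum mulrDr mulr_sumr !hornerXn.
congr (_ + _).
  by rewrite exprMn exprVn mulrCA mulfV ?mulr1 // expf_neq0.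
apply: eq_bigr => k _.
rewrite !hornerZ derivnXn !hornerMn !hornerXn.
rewrite (_ : s ^+ d = s ^+ (d - k.+1) * s ^+ k.+1); last by rewrite -exprD subnK.
rewrite exprMn exprVn.
have h1 : s ^+ (d - k.+1) * (s ^+ (d - k.+1))^-1 = 1 by rewrite mulfV // expf_neq0.
move: h1; set e := (d - k.+1)%N; set n := (d ^_ k.+1)%N.
set t := (s ^+ e)^-1; set u := s ^+ e; set v := s ^+ k.+1; set w := z ^+ e => h1.

rewrite [RHS](_ : _ = (u * t) * (c k * v * (w *+ n))); last by ring.
by rewrite h1 mul1r.
Qed.

End Real.

Lemma hypXn (R : realType) (d : nat) : hyperbolic ('X^d : {poly R}).
Proof.
split; first by rewrite monic_neq0 // monicXn.
exists (nseq d 0); rewrite lead_coefXn scale1r.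
elim: d => [|d IH]; first by rewrite big_nil expr0.
by rewrite /= big_cons -IH polyC0 subr0 exprS.
Qed.

Lemma map_nuijXn (R : realType) d (a : 'I_d -> R) (s : R) :
  map_poly (real_complex R) (nuij_poly a 'X^d s) =
  'X^d + \sum_(k < d) (real_complex R (a k) * real_complex R s ^+ k.+1) *: ('X^d)^`(k.+1).
Proof.
rewrite /nuij_poly rmorphD /= map_polyXn rmorph_sum /=; congr (_ + _).
by apply: eq_bigr => k _; rewrite map_polyZ /= rmorphM rmorphXn -derivnS -derivn_map map_polyXn.
Qed.

Lemma map_q (R : realType) d (a : 'I_d -> R) :
  map_poly (real_complex R) (q_poly a) =
  'X^d + \sum_(k < d) real_complex R (a k) *: ('X^d)^`(k.+1).
Proof.
rewrite /q_poly rmorphD /= map_polyXn rmorph_sum /=; congr (_ + _).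
by apply: eq_bigr => k _; rewrite map_polyZ /= -derivnS -derivn_map map_polyXn.
Qed.

Theorem theoremA (R : realType) (d : nat) (a : 'I_d -> R) :
  (1 <= d)%N -> (is_Nuij a <-> hyperbolic (q_poly a)).
Proof.
move=> _; split.
  move=> hN; have := hN 'X^d _ (hypXn R d) 1.
  rewrite size_polyXn /= => /(_ erefl).
  rewrite /nuij_poly /q_poly; congr (hyperbolic (_ + _)).
  by apply: eq_bigr => k _; rewrite expr1n mulr1.
move=> hq p hp hyp s.
set phis : {poly R} := 1%:P + \sum_(k < d) (a k * s ^+ k.+1) *: 'X^(k.+1).
have E : forall p, nuij_poly a p s = applyD phis p.
  move=> q; rewrite /phis applyDD applyD_const scale1r applyD_sum /nuij_poly.
  by congr (_ + _); apply: eq_bigr => k _; rewrite applyDZ applyD_Xn.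
rewrite E; apply: noroots_hyp.
case: hyp => p0 [lams Dp].
have hsz : size lams = d.
  by rewrite -hp Dp size_scale ?lead_coef_eq0 // size_prod_XsubC.
apply: (@main_noroots R phis p (lead_coef p) lams) => //.
  by rewrite lead_coef_eq0.
rewrite hsz -E => z hz.
have z0 : z != 0 by apply: contraNneq hz => ->.
rewrite map_nuijXn.
have [->|s0] := eqVneq s 0.
  rewrite rmorph0 big1 ?addr0 ?hornerXn ?expf_neq0 // => k _.
  by rewrite expr0n /= mulr0 scale0r.
rewrite scale_eval ?fmorph_eq0 // -map_q mulf_neq0 ?expf_neq0 ?fmorph_eq0 //.
apply: hyp_noroots => //.
rewrite -fmorphV ImM /= mulr0 add0r mulf_neq0 // invr_eq0 //.
Qed.
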